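(* For any permutation $\pi$ of $D$, the function $f:D'^2\to\mathbb{R}$ given by $f(x,y)=0$ if $x=y=0$ or if $x,y\in D$ with $x=\pi(y)$; $f(x,y)=1$ if $x,y\in D$ with $x\ne\pi(y)$; and $f(x,y)=\tfrac12$ if exactly one of $x,y$ equals $0$ (the basic $k$-submodular relaxation of the soft version of the constraint $(x=\pi(y))$) is $k$-submodular representable.
   Context: $D=\{1,\dots,k\}$, $D'=\{0\}\cup D$. For a variable set $X$ and $v\in X$ let $X_v=\{v_i:i\in D\}$. An $(X,k)$-network is a directed network with nonnegative capacities $c$ on vertex set $\bigcup_{v\in X}X_v\cup\{s,t\}$; an $s$-$t$ cut $S$ has capacity the total capacity of edges leaving $S$. For $\phi:X\to D'$, $S_\phi=\{s\}\cup\{v_{\phi(v)}:\phi(v)\ne0\}$; the network represents $g$ if $c(S_\phi)=g(\phi)$ for all $\phi$. For an $s$-$t$ cut $S$, $\nu(S)=\{s\}\cup\{v_i:S\cap X_v=\{v_i\}\}$; the network is $k$-submodular if $c(S)\ge c(\nu(S))$ for every $s$-$t$ cut. A function of variables $X$ is $k$-submodular representable if some $k$-submodular $(X,k)$-network represents it. *)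

(* Defs.v *)
From HB Require Import structures.
From mathcomp Require Import all_boot all_order all_algebra all_fingroup.
From mathcomp Require Import reals.
Set Implicit Arguments. Unset Strict Implicit. Unset Printing Implicit Defensive.
Import Order.TTheory GRing.Theory Num.Theory.
Local Open Scope ring_scope.

(* Conventions:
   - D = {1,...,k} is represented by 'I_k (i : 'I_k stands for i+1).
   - D' = {0} ∪ D is represented by option 'I_k (None stands for 0,
     Some i stands for i+1).
   - The vertex set ⋃_v X_v ∪ {s,t} of an (X,k)-network is
     node X k := option (option (X * 'I_k)) with
       None = s, Some None = t, Some (Some (v,i)) = v_{i+1}. *)

Definition node (X : finType) (k : nat) : finType := option (option (X * 'I_k)).
Definition src {X : finType} {k : nat} : node X k := None.
Definition snk {X : finType} {k : nat} : node X k := Some None.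
Definition vx {X : finType} {k : nat} (v : X) (i : 'I_k) : node X k := Some (Some (v, i)).

Definition network (R : realType) (X : finType) (k : nat) := node X k -> node X k -> R.

Definition nonneg_network (R : realType) (X : finType) (k : nat) (c : network R X k) :=
  forall u w, 0 <= c u w.

Definition is_st_cut (X : finType) (k : nat) (S : {set node X k}) :=
  (src \in S) && (snk \notin S).

Definition cut_cap (R : realType) (X : finType) (k : nat) (c : network R X k)
  (S : {set node X k}) : R :=
  \sum_(u in S) \sum_(w in ~: S) c u w.

Definition S_of (X : finType) (k : nat) (phi : X -> option 'I_k) : {set node X k} :=
  src |: [set w : node X k | [exists v : X, exists i : 'I_k, (w == vx v i) && (phi v == Some i)]].

Definition nu (X : finType) (k : nat) (S : {set node X k}) : {set node X k} :=
  src |: [set w : node X k | [exists v : X, exists i : 'I_k,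
     [&& w == vx v i, vx v i \in S & [forall j : 'I_k, (vx v j \in S) ==> (j == i)]]]].

Definition represents (R : realType) (X : finType) (k : nat) (c : network R X k)
  (g : (X -> option 'I_k) -> R) :=
  forall phi : X -> option 'I_k, cut_cap c (S_of phi) = g phi.

Definition ksubmodular_network (R : realType) (X : finType) (k : nat) (c : network R X k) :=
  forall S : {set node X k}, is_st_cut S -> cut_cap c (nu S) <= cut_cap c S.

Definition ksubmodular_representable (R : realType) (X : finType) (k : nat)
  (g : (X -> option 'I_k) -> R) :=
  exists c : network R X k,
    [/\ nonneg_network c, ksubmodular_network c & represents c g].

Definition f_perm (R : realType) (k : nat) (pi : {perm 'I_k})
  (x y : option 'I_k) : R :=
  match x, y with
  | None, None => 0
  | Some a, Some b => if a == pi b then 0 else 1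
  | _, _ => 1 / 2
  end.

Definition f_perm_fun (R : realType) (k : nat) (pi : {perm 'I_k})
  (phi : 'I_2 -> option 'I_k) : R :=
  f_perm R pi (phi ord0) (phi (lift ord0 ord0)).

(* Main.v *)
Require Import Defs.
From mathcomp Require Import all_boot all_order all_algebra all_fingroup.
From mathcomp Require Import reals.
From mathcomp Require Import lra.
Set Implicit Arguments. Unset Strict Implicit. Unset Printing Implicit Defensive.
Import Order.TTheory GRing.Theory Num.Theory.
Local Open Scope ring_scope.

Lemma sum_opt (R : nmodType) (T : finType) (F : option T -> R) :
  \sum_(u : option T) F u = F None + \sum_(u : T) F (Some u).
Proof.
have P : perm_eq (index_enum (option T)) (option_enum T).
  have ax := @option_enumP T.
  apply: uniq_perm; first exact: index_enum_uniq.
  - apply/count_mem_uniq => x. rewrite ax. have : x \in option_enum T.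
      by rewrite -has_pred1 has_count ax.
    by move=> ->.
  - move=> x; rewrite mem_index_enum -has_pred1 has_count ax. done.
rewrite (perm_big _ P) /option_enum big_cons big_map.
by [] || (congr (_ + _); rewrite -[RHS]big_enum /= enumT).
Qed.

Lemma sum_node (R : nmodType) (X : finType) (k : nat) (F : node X k -> R) :
  F src = 0 -> F snk = 0 ->
  \sum_(u : node X k) F u = \sum_(v : X) \sum_(i : 'I_k) F (vx v i).
Proof.
move=> F0 F1; rewrite sum_opt sum_opt.
rewrite [F None]F0 [F (Some None)]F1 !add0r pair_big.
by apply: eq_bigr => -[v i].
Qed.

Section Main.
Variables (R : realType) (k : nat) (pi : {perm 'I_k}).

Definition x0 : 'I_2 := ord0.
Definition x1 : 'I_2 := lift ord0 ord0.

Definition hh (a b : bool) : R := if a == b then 0 else 1/2.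

Lemma hhC a b : hh a b = hh b a.
Proof. by case: a; case: b. Qed.

Lemma hh_ge0 a b : 0 <= hh a b.
Proof. rewrite /hh; case: (a == b) => //; lra. Qed.

Definition cnet : network R 'I_2 k := fun u w =>
  match u, w with
  | Some (Some (v, i)), Some (Some (v', j)) =>
      if ((v == x0) && (v' == x1) && (i == pi j)) || ((v == x1) && (v' == x0) && (j == pi i))
      then 1/2 else 0
  | _, _ => 0
  end.

Lemma cnet_ge0 : nonneg_network cnet.
Proof.
move=> [[[v i]|]|] [[[v' j]|]|] //=; case: ifP => _ //; lra.
Qed.

Lemma cut_formula (S : {set node 'I_2 k}) :
  cut_cap cnet S = \sum_(j : 'I_k) hh (vx x0 (pi j) \in S) (vx x1 j \in S).
Proof.
rewrite /cut_cap.
have -> : \sum_(u in S) \sum_(w in ~: S) cnet u w =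
   \sum_u \sum_w (if (u \in S) && (w \notin S) then cnet u w else 0).
  rewrite big_mkcond; apply: eq_bigr => u _.
  case: (u \in S) => /=; last by rewrite big1.
  by rewrite big_mkcond; apply: eq_bigr => w _; rewrite inE.
rewrite sum_node; last 2 first.
- by rewrite big1 // => w _; case: ifP.
- by rewrite big1 // => w _; case: ifP.
have E : forall v i, \sum_w (if (vx v i \in S) && (w \notin S) then cnet (vx v i) w else 0)
  = \sum_j (if (vx v i \in S) && (vx x0 j \notin S) then cnet (vx v i) (vx x0 j) else 0)
   + \sum_j (if (vx v i \in S) && (vx x1 j \notin S) then cnet (vx v i) (vx x1 j) else 0).
  move=> v i; rewrite sum_node; [|by case: ifP|by case: ifP].
  by rewrite !big_ord_recl big_ord0 addr0.
under eq_bigr => v _ do under eq_bigr => i _ do rewrite E.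
rewrite !big_ord_recl big_ord0 addr0 -/x0 -/x1 !big_split /=.
have Z : forall b : 'I_k -> 'I_k -> bool, \sum_(i < k) \sum_(j < k) (if b i j then 0 else 0 : R) = 0.
  by move=> b; rewrite big1 // => i _; rewrite big1 // => j _; case: ifP.
rewrite !Z.
rewrite add0r addr0 exchange_big -big_split /=.
apply: eq_bigr => j _.
rewrite (bigD1 (pi j)) //= eqxx orbF big1 ?addr0; last first.
  by move=> i /negbTE ->; rewrite orbF; case: ifP.
rewrite (bigD1 (pi j)) //= eqxx big1 ?addr0; last first.
  by move=> i /negbTE ->; case: ifP.
rewrite /hh.
case: (vx x0 (pi j) \in S); case: (vx x1 j \in S) => /=; lra.
Qed.

End Main.

Lemma in_S_of (X : finType) (k : nat) (phi : X -> option 'I_k) v i :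
  (vx v i \in S_of phi) = (phi v == Some i).
Proof.
rewrite /S_of !inE /=.
apply/existsP/eqP => [[v' /existsP [i' /andP [/eqP [-> ->] /eqP //]]]|E].
by exists v; apply/existsP; exists i; rewrite eqxx E eqxx.
Qed.

Lemma in_nu (X : finType) (k : nat) (S : {set node X k}) v i :
  (vx v i \in nu S) = (vx v i \in S) && [forall j, (vx v j \in S) ==> (j == i)].
Proof.
rewrite /nu !inE /=.
apply/existsP/andP => [[v' /existsP [i' /and3P [/eqP [-> ->] H1 H2]]] //|[H1 H2]].
by exists v; apply/existsP; exists i; rewrite eqxx H1 H2.
Qed.

Definition uq (J : finType) (a : J -> bool) (j : J) := a j && [forall l, a l ==> (l == j)].

Lemma uqE (J : finType) (a : J -> bool) j0 : uq a j0 -> forall j, (a j = (j == j0)) /\ (uq a j = (j == j0)).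
Proof.
move=> /andP [aj0 /forallP H] j.
have E : a j = (j == j0).
  by apply/idP/eqP => [aj|->//]; apply/eqP; exact: (implyP (H j) aj).
split=> //; rewrite /uq E; case: eqP => [->|//] /=.
by apply/forallP.
Qed.

Lemma le_single (R : realType) (J : finType) (F : J -> R) j0 :
  (forall j, 0 <= F j) -> F j0 <= \sum_j F j.
Proof. by move=> H; rewrite (bigD1 j0) //= lerDl sumr_ge0. Qed.

Lemma one_sided (R : realType) (J : finType) (a b : J -> bool) j0 :
  uq a j0 -> ~~ [exists j, uq b j] ->
  \sum_j hh R (uq a j) (uq b j) <= \sum_j hh R (a j) (b j).
Proof.
move=> ua /existsPn nb.
have [ex|] := boolP [exists j, a j != b j]; last first.
  move/existsPn=> H; move: (H j0); case: (uqE ua j0) => -> _; rewrite eqxx.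
  case bj0: (b j0) => //= _.
  have: ~~ uq b j0 by exact: nb.
  rewrite /uq bj0 /= negb_forall => /existsP [l]; rewrite negb_imply => /andP [bl lj0].
  by move: (H l); case: (uqE ua l) => -> _; rewrite (negbTE lj0) bl.
case/existsP: ex => j1 ne.
have -> : \sum_j hh R (uq a j) (uq b j) = hh R (a j1) (b j1).
  rewrite (bigD1 j0) //= big1 ?addr0.
    rewrite (negbTE (nb j0)); case: (uqE ua j0) => _ ->; rewrite eqxx.
    move: ne; case: (uqE ua j1) => -> _; case: (b j1); case: (j1 == j0) => //.
  move=> j jj0; rewrite (negbTE (nb j)); case: (uqE ua j) => _ ->.
  by rewrite (negbTE jj0).
apply: (@le_single R J (fun j => hh R (a j) (b j))) => j; exact: hh_ge0.
Qed.

Lemma sub_abs (R : realType) (J : finType) (a b : J -> bool) :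
  \sum_j hh R (uq a j) (uq b j) <= \sum_j hh R (a j) (b j).
Proof.
have [/existsP [j0 ua]|na] := boolP [exists j, uq a j];
  have [/existsP [j1 ub]|nb] := boolP [exists j, uq b j].
- rewrite le_eqVlt; apply/orP; left; apply/eqP/eq_bigr => j _.
  by case: (uqE ua j) => -> ->; case: (uqE ub j) => -> ->.
- exact: one_sided ua nb.
- rewrite (eq_bigr (fun j => hh R (uq b j) (uq a j))); last by move=> j _; rewrite hhC.
  rewrite [X in _ <= X](eq_bigr (fun j => hh R (b j) (a j))); last by move=> j _; rewrite hhC.
  exact: one_sided ub na.
- rewrite big1; first by apply: sumr_ge0 => j _; exact: hh_ge0.
  move=> j _; move/existsPn: na => /(_ j) /negbTE ->.
  by move/existsPn: nb => /(_ j) /negbTE ->.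
Qed.

Lemma rep (R : realType) (k : nat) (pi : {perm 'I_k}) :
  represents (cnet R pi) (f_perm_fun R pi).
Proof.
move=> phi; rewrite cut_formula.
under eq_bigr do rewrite !in_S_of.
rewrite /f_perm_fun /f_perm -/x0 -/x1.
have eS : forall a b : 'I_k, (Some a == Some b) = (a == b).
  by move=> a b; apply/eqP/eqP => [[]|->].
have hh0 : forall x, hh R x x = 0 by move=> x; rewrite /hh eqxx.
have hh1 : hh R true false = 1/2 by [].
have hh2 : hh R false true = 1/2 by [].
case: (phi x0) => [a|]; case: (phi x1) => [b|] /=; under eq_bigr do rewrite ?eS.
- case: eqP => [->|ne].
    by rewrite big1 // => j _; rewrite (inj_eq perm_inj) hh0.
  set p := (pi^-1)%g a.
  have pa : pi p = a by rewrite /p permKV.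
  have pb : p != b by apply/eqP => E; apply: ne; rewrite -pa E.
  rewrite (bigD1 b) //= (bigD1 p) //= pa !eqxx [b == p]eq_sym (negbTE pb).
  have -> : (a == pi b) = false by apply/eqP.
  rewrite big1 ?addr0; first by rewrite hh1 hh2; lra.
  move=> j /andP [jb jp]; rewrite [b == j]eq_sym (negbTE jb).
  have -> : (a == pi j) = false.
    by apply/eqP => E; move/eqP: jp; apply; rewrite /p E permK.
  exact: hh0.
- set p := (pi^-1)%g a.
  have pa : pi p = a by rewrite /p permKV.
  rewrite (bigD1 p) //= pa eqxx big1 ?addr0 //.
  move=> j jp /=; have -> : (a == pi j) = false.
    by apply/eqP => E; move/eqP: jp; apply; rewrite /p E permK.
  exact: hh0.
- rewrite (bigD1 b) //= eqxx big1 ?addr0 //.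
  by move=> j /negbTE jb /=; rewrite [b == j]eq_sym jb hh0.
- by rewrite big1 // => j _ /=; rewrite hh0.
Qed.

Lemma fa_perm (k : nat) (pi : {perm 'I_k}) (A : 'I_k -> bool) j :
  [forall l, A l ==> (l == pi j)] = [forall l, A (pi l) ==> (l == j)].
Proof.
apply/forallP/forallP => H l.
  by rewrite -(inj_eq (@perm_inj _ pi)); exact: H.
move: (H ((pi^-1)%g l)); rewrite permKV => /implyP Hl; apply/implyP => Al.
by rewrite -(permKV pi l) (eqP (Hl Al)).
Qed.

Theorem lemma21 (R : realType) (k : nat) (pi : {perm 'I_k}) :
  ksubmodular_representable (f_perm_fun R pi).
Proof.
exists (cnet R pi); split; [exact: cnet_ge0| |exact: rep].
move=> S _; rewrite !cut_formula.
under eq_bigr do rewrite !in_nu fa_perm.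
exact: (sub_abs R (fun j => vx x0 (pi j) \in S) (fun j => vx x1 j \in S)).
Qed.
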